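(* Let $\mathcal{X}^{U}=\mathcal{X}^{+,U}\cup\mathcal{X}^{-,U}$ and let $\mathcal{V}$ be the Vervaat transform on $\mathcal{X}^U$. Then $\mathcal{V}:\mathcal{X}^U\to\mathcal{X}^U$ is a bijection with $\theta(\mathcal{V}(x))=\theta(x)$ and $H(\mathcal{V}(x))=-H(x)$; it maps $\mathcal{X}^{+,U}$ into $\mathcal{X}^{-,U}$ and $\mathcal{X}^{-,U}$ into $\mathcal{X}^{+,U}$; its level numbers satisfy $$N_{-h}(\mathcal{V}(x))=N_{H(x)-1-h}(x)\quad\text{for }h=0,\dots,H(x)-1,\text{ when }x\in\mathcal{X}^{+,U},$$ $$N_{-h}(\mathcal{V}(x))=N_{H(x)+1-h}(x)\quad\text{for }h=H(x)+1,\dots,0,\text{ when }x\in\mathcal{X}^{-,U};$$ and $\mathcal{V}$ is an involution: $\mathcal{V}\circ\mathcal{V}=\mathrm{Id}_{\mathcal{X}^U}$, so $\mathcal{V}^{-1}=\mathcal{V}$.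
   Context: A positive (resp. negative) excursion is a finite integer sequence $x=(x_n:0\le n\le\theta)$ with $x_0=x_\theta=0$, $x_n>0$ (resp. $x_n<0$) for $0<n<\theta$, and jumps $y_n=x_{n+1}-x_n\in\{1,-1\}$; $\theta=\theta(x)$ is its length. The height is $H(x)=\max_n x_n$ for positive and $H(x)=\min_n x_n$ for negative excursions. Level numbers: for positive $x$, $N_h(x)=|\{n\in[0,\theta):y_n=1,x_n=h\}|$ for $h\ge0$; for negative $x$, $N_h(x)=|\{n\in[0,\theta):y_n=-1,x_n=h\}|$ for $h\le0$. $\mathcal{X}^{+,U}$ is the set of positive excursions with $N_{H(x)-1}(x)=1$ and $\mathcal{X}^{-,U}$ the set of negative excursions with $N_{H(x)+1}(x)=1$; equivalently, excursions whose height is attained at a unique time $m\in(0,\theta)$. Vervaat transform: for $x\in\mathcal{X}^U$ with length $\theta$ and unique $m$ such that $x_m=H(x)$, $\mathcal{V}(x)=\hat x$ where $\hat x_n=x_{n+m}-H(x)$ for $0\le n\le\theta-m$ and $\hat x_n=x_{n+m-\theta}-H(x)$ for $\theta-m+1\le n\le\theta$. *)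

(* Defs.v *)
(* excursions are sequences of integers x = [:: x_0; ...; x_theta]. *)
From mathcomp Require Import all_boot all_order all_algebra.
Set Implicit Arguments. Unset Strict Implicit. Unset Printing Implicit Defensive.
Import Order.TTheory GRing.Theory Num.Theory.
Local Open Scope ring_scope.

Definition theta (x : seq int) : nat := (size x).-1.

Definition jump (x : seq int) (n : nat) : int := nth 0 x n.+1 - nth 0 x n.

Definition is_exc (pos : bool) (x : seq int) : Prop :=
  [/\ (0 < size x)%N,
      nth 0 x 0 = 0,
      nth 0 x (theta x) = 0,
      (forall n : nat, (0 < n < theta x)%N ->
          if pos then 0 < nth 0 x n else nth 0 x n < 0)
    & (forall n : nat, (n < theta x)%N -> jump x n = 1 \/ jump x n = -1)].

Definition is_pos_exc x := is_exc true x.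
Definition is_neg_exc x := is_exc false x.

(* height: max for positive excursions, min for negative ones.  A nontrivial
   positive excursion has a positive entry, a negative one has none; for the
   trivial excursion both give 0. *)
Definition height (x : seq int) : int :=
  if has (fun v => 0 < v) x then foldr Num.max 0 x else foldr Num.min 0 x.

Definition Npos (x : seq int) (h : int) : nat :=
  count (fun n => (jump x n == 1) && (nth 0 x n == h)) (iota 0 (theta x)).
Definition Nneg (x : seq int) (h : int) : nat :=
  count (fun n => (jump x n == -1) && (nth 0 x n == h)) (iota 0 (theta x)).

Definition XposU (x : seq int) : Prop := is_pos_exc x /\ Npos x (height x - 1) = 1%N.
Definition XnegU (x : seq int) : Prop := is_neg_exc x /\ Nneg x (height x + 1) = 1%N.
Definition XU (x : seq int) : Prop := XposU x \/ XnegU x.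

(* Vervaat transform: m = the (unique, for x in XU) time with x_m = H(x);
   hat x_n = x_{n+m} - H for 0 <= n <= theta - m (= drop m x),
   hat x_n = x_{n+m-theta} - H for theta-m+1 <= n <= theta (indices 1..m). *)
Definition vervaat (x : seq int) : seq int :=
  let H := height x in
  let m := index H x in
  map (fun v => v - H) (drop m x ++ take m (behead x)).

(* Main.v *)
Require Import Defs.
From mathcomp Require Import all_boot all_order all_algebra.
From mathcomp Require Import zify ring lra.
Import Order.TTheory GRing.Theory Num.Theory.
Local Open Scope ring_scope.

Ltac fixsz := repeat match goal with
 | H : context [@size ?T ?s] |- _ => progress change (@size T s) with (@size int s) in H
 | |- context [@size ?T ?s] => progress change (@size T s) with (@size int s)
 end.
Ltac nlia := unfold theta in *; fixsz; lia.

Definition vm (m : nat) (x : seq int) : seq int :=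
  map (fun v : int => v - nth 0 x m) (drop m x ++ take m (behead x)).

Lemma size_vm m x : (m < size x)%N -> size (vm m x) = size x.
Proof.
move=> hm; rewrite /vm size_map size_cat size_drop size_take size_behead.
case: ifP => ?; nlia.
Qed.

Lemma theta_vm m x : (m < size x)%N -> theta (vm m x) = theta x.
Proof. by move=> hm; rewrite /theta size_vm. Qed.

Lemma nth_vm m x n : (m < size x)%N -> (n < size x)%N ->
  nth 0 (vm m x) n = nth 0 x (if (n <= theta x - m)%N then n + m else n + m - theta x)%N
                     - nth 0 x m.
Proof.
move=> hm hn; rewrite /vm (nth_map 0); last first.
  rewrite size_cat size_drop size_take size_behead; case: ifP => ?; nlia.
rewrite nth_cat size_drop /theta; case: ifP => h1.
  rewrite nth_drop ifT; last by nlia.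
  by rewrite addnC.
rewrite nth_take; last by nlia.
rewrite nth_behead ifF; last by nlia.
congr (nth _ _ _ - _); nlia.
Qed.

Definition rotf (t m n : nat) : nat := if (n < t - m)%N then (n + m)%N else (n + m - t)%N.

Lemma jump_vm m x n : (m < size x)%N -> nth 0 x 0 = nth 0 x (theta x) ->
  (n < theta x)%N ->
  jump (vm m x) n = jump x (rotf (theta x) m n).
Proof.
move=> hm h0 hn; have hs : (theta x < size x)%N by rewrite /theta in hn *; nlia.
rewrite /jump /rotf !nth_vm //; try nlia.
case: (ltnP n (theta x - m)) => h.
  rewrite ifT; last by nlia.
  rewrite addSn; ring.

case: (ltnP (theta x - m) n) => h'.
  have -> : (n.+1 + m - theta x = (n + m - theta x).+1)%N by nlia. ring.
have e1 : (n + m - theta x = 0)%N by nlia.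
have e2 : (n.+1 + m - theta x = 1)%N by nlia.
have e3 : (n + m = theta x)%N by nlia.
rewrite e1 e2 e3 -h0; ring.
Qed.

Definition Ncnt (x : seq int) (e h : int) : nat :=
  count (fun n => (jump x n == e) && (nth 0 x n == h)) (iota 0 (theta x)).


Local Open Scope nat_scope.
Lemma count_rot (P : pred nat) t m : (m <= t)%N ->
  count (fun n => P (rotf t m n)) (iota 0 t) = count P (iota 0 t).
Proof.
move=> hm.
rewrite -[count (fun n => _) _](count_map (rotf t m) P).
have -> : iota 0 t = iota 0 (t - m) ++ iota (0 + (t - m)) m.
  by rewrite -iotaD; congr iota; nlia.
rewrite map_cat !count_cat.
have -> : [seq rotf t m n | n <- iota 0 (t - m)] = iota (m + 0) (t - m).
  rewrite iotaDl; apply/eq_in_map => n; rewrite mem_iota => hn.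
  rewrite /rotf ifT; nlia.
have -> : [seq rotf t m n | n <- iota (0 + (t - m)) m] = iota 0 m.
  rewrite add0n -{1}(addn0 (t - m)) iotaDl -map_comp -[RHS]map_id.
  apply/eq_in_map => n; rewrite mem_iota => hn /=.
  rewrite /rotf ifF; nlia.
have iD : forall a b, iota 0 a ++ iota a b = iota 0 (a + b) by move=> a b; rewrite iotaD.
rewrite addnC -!count_cat addn0 add0n !iD; congr (count _ (iota _ _)); nlia.
Qed.
Local Open Scope ring_scope.

Lemma Ncnt_vm m x e c : (m < size x)%N -> nth 0 x 0 = nth 0 x (theta x) ->
  Ncnt (vm m x) e c = Ncnt x e (c + nth 0 x m).
Proof.
move=> hm h0; rewrite /Ncnt theta_vm //.
have hmt : (m <= theta x)%N by nlia.
rewrite -[RHS](count_rot _ _ _ hmt); apply: eq_in_count => n; rewrite mem_iota => /andP[_ hn].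
have hn' : (n < theta x)%N by nlia.
have hn2 : (n < size x)%N by nlia.
rewrite /= jump_vm // nth_vm //.
have -> : nth 0 x (if (n <= theta x - m)%N then (n + m)%N else (n + m - theta x)%N)
        = nth 0 x (rotf (theta x) m n).
  rewrite /rotf; case: (ltnP n (theta x - m)) => h1.
    by rewrite ifT //; nlia.
  case: (ltnP (theta x - m) n) => h2; first by [].
  have e1 : (n + m - theta x = 0)%N by nlia.
  have e3 : (n + m = theta x)%N by nlia.
  by rewrite e1 e3 h0.
congr (_ && _). apply/eqP/eqP => h; [rewrite -h | rewrite h]; ring.
Qed.

Lemma Ncnt_cons a s e h : s != [::] ->
  Ncnt (a :: s) e h = (((nth 0 s 0 - a == e) && (a == h))%R + Ncnt s e h)%N.
Proof.
case: s => [//|b r] _.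
rewrite /Ncnt /theta /=.
have -> : iota 1 (size r) = map (addn 1) (iota 0 (size r)) by exact: (iotaDl 1 0 _).
rewrite count_map; congr addn.
Qed.

Definition steps (x : seq int) := forall n : nat, (n < theta x)%N -> jump x n = 1 \/ jump x n = -1.

Lemma crossing x k : (0 < size x)%N -> steps x ->
  addn (Ncnt x 1 k) (nth 0 x (theta x) <= k)%R = addn (Ncnt x (-1) (k + 1)) (nth 0 x 0 <= k)%R.
Proof.
elim: x => [//|a s IH] _ hst.
case: s IH hst => [|b r] IH hst.
  by rewrite /Ncnt /theta /=.
rewrite (Ncnt_cons a (b :: r) 1 k) // (Ncnt_cons a (b :: r) (-1) (k + 1)) //.
have hst' : steps (b :: r).
  by move=> n hn; apply: (hst n.+1); rewrite /theta /= in hn *; nlia.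
have := IH isT hst'.
have -> : nth 0 (a :: b :: r) (theta (a :: b :: r)) = nth 0 (b :: r) (theta (b :: r)) by [].
have := hst 0%N isT; rewrite /jump /= => hj.
move: (nth 0 (b :: r) _) => l; move: (Ncnt (b :: r) 1 k) (Ncnt (b :: r) (-1) (k+1)) => p q.
lia.
Qed.

Lemma vm_inv m (x : seq int) : (m < size x)%N -> nth 0 x 0 = 0 -> nth 0 x (theta x) = 0 ->
  vm (theta x - m) (vm m x) = x.
Proof.
move=> hm h0 ht.
have hsz : size x = (theta x).+1 by rewrite /theta; nlia.
have hm' : (theta x - m < size (vm m x))%N by rewrite size_vm //; nlia.
apply: (@eq_from_nth _ 0).
  rewrite size_vm; last exact: hm'.
  by rewrite size_vm.
move=> n; rewrite size_vm; last exact: hm'.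
rewrite size_vm // => hn.
rewrite nth_vm; [|exact: hm'|by rewrite size_vm].
rewrite theta_vm //.
have E := @nth_vm m x ^~ hm.
rewrite (E (theta x - m)%N); last by nlia.
have -> : (if (theta x - m <= theta x - m)%N then (theta x - m + m)%N
    else (theta x - m + m - theta x)%N) = theta x by case: ifP => ?; nlia.
rewrite ht.
case: (leqP n m) => hnm.
  have -> : (if (n <= theta x - (theta x - m))%N then (n + (theta x - m))%N
     else (n + (theta x - m) - theta x)%N) = (n + (theta x - m))%N by case: ifP => ?; nlia.
  rewrite E; last by nlia.
  case: (posnP n) => [n0|n0].
    have -> : (if (n + (theta x - m) <= theta x - m)%N then (n + (theta x - m) + m)%N
     else (n + (theta x - m) + m - theta x)%N) = theta x by case: ifP => ?; nlia.
    rewrite n0 ht h0; ring.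
  have -> : (if (n + (theta x - m) <= theta x - m)%N then (n + (theta x - m) + m)%N
     else (n + (theta x - m) + m - theta x)%N) = n by case: ifP => ?; nlia.
  ring.
have -> : (if (n <= theta x - (theta x - m))%N then (n + (theta x - m))%N
   else (n + (theta x - m) - theta x)%N) = (n - m)%N by case: ifP => ?; nlia.
rewrite E; last by nlia.
have -> : (if (n - m <= theta x - m)%N then (n - m + m)%N
   else (n - m + m - theta x)%N) = n by case: ifP => ?; nlia.
ring.
Qed.

Lemma count1 (T : eqType) (P : pred T) s a b : count P s = 1%N ->
  a \in s -> P a -> b \in s -> P b -> a = b.
Proof.
move=> hc ha pa hb pb.
have ha' : a \in filter P s by rewrite mem_filter pa.
have hb' : b \in filter P s by rewrite mem_filter pb.
move: hc ha' hb'; rewrite -size_filter.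
case: (filter P s) => [|c [|? ?]] //= _.
by rewrite !inE => /eqP -> /eqP ->.
Qed.

Lemma fmax_ge (s : seq int) (v : int) : v \in s -> v <= foldr Num.max 0 s.
Proof.
elim: s => [//|a s IH]; rewrite inE => /orP[/eqP ->|h] /=; rewrite le_max ?lexx //.
by rewrite IH ?orbT.
Qed.

Lemma fmax_le (s : seq int) (v : int) : 0 <= v -> (forall w, w \in s -> w <= v) -> foldr Num.max 0 s <= v.
Proof.
move=> h0; elim: s => [//|a s IH] hs /=; rewrite ge_max hs ?mem_head //=.
by apply: IH => w hw; apply: hs; rewrite inE hw orbT.
Qed.

Lemma fmax_in (s : seq int) : foldr Num.max 0 s \in 0 :: s.
Proof.
elim: s => [|a s IH] /=; first by rewrite inE.
rewrite maxEle; case: ifP => _; last by rewrite !inE eqxx orbT.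
move: IH; rewrite !inE => /orP[->//|h]; by rewrite h !orbT.
Qed.

Lemma fmin_le (s : seq int) (v : int) : v \in s -> foldr Num.min 0 s <= v.
Proof.
elim: s => [//|a s IH]; rewrite inE => /orP[/eqP ->|h] /=; rewrite ge_min ?lexx //.
by rewrite IH ?orbT.
Qed.

Lemma fmin_ge (s : seq int) (v : int) : v <= 0 -> (forall w, w \in s -> v <= w) -> v <= foldr Num.min 0 s.
Proof.
move=> h0; elim: s => [//|a s IH] hs /=; rewrite le_min hs ?mem_head //=.
by apply: IH => w hw; apply: hs; rewrite inE hw orbT.
Qed.

Lemma fmin_le0 (s : seq int) : foldr Num.min 0 s <= 0.
Proof. by elim: s => [//|a s IH] /=; rewrite ge_min IH orbT. Qed.

Lemma fmax_ge0 (s : seq int) : 0 <= foldr Num.max 0 s.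
Proof. by elim: s => [//|a s IH] /=; rewrite le_max IH orbT. Qed.

Lemma height_nonneg (s : seq int) : (forall w, w \in s -> 0 <= w) -> height s = foldr Num.max 0 s.
Proof.
move=> hs; rewrite /height; case: ifP => // /negbT /hasPn hn.
have e1 : foldr Num.min 0 s = 0.
  by apply/eqP; rewrite eq_le fmin_le0 fmin_ge.
have e2 : foldr Num.max 0 s = 0.
  apply/eqP; rewrite eq_le fmax_ge0 andbT fmax_le // => w /hn.
  by rewrite leNgt.
by rewrite e1 e2.
Qed.

Lemma height_nonpos (s : seq int) : (forall w, w \in s -> w <= 0) -> height s = foldr Num.min 0 s.
Proof.
move=> hs; rewrite /height ifF //; apply/negbTE/hasPn => w /hs.
by rewrite leNgt.
Qed.

Lemma height_min (s : seq int) v : v \in s -> (forall w, w \in s -> v <= w <= 0) -> height s = v.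
Proof.
move=> hv hs; rewrite height_nonpos; last by move=> w /hs /andP[].
apply/eqP; rewrite eq_le fmin_le //= fmin_ge //.
  by case/andP: (hs v hv).
by move=> w /hs /andP[].
Qed.

Lemma vervaatE (s : seq int) : height s \in s -> vervaat s = vm (index (height s) s) s.
Proof. by move=> h; rewrite /vervaat /vm nth_index. Qed.

Lemma NposE x h : Npos x h = Ncnt x 1 h. Proof. by []. Qed.
Lemma NnegE x h : Nneg x h = Ncnt x (-1) h. Proof. by []. Qed.

Lemma cross (x : seq int) k : (0 < size x)%N -> steps x -> nth 0 x 0 = nth 0 x (theta x) ->
  Ncnt x (-1) (k + 1) = Ncnt x 1 k.
Proof.
move=> hs hst he; have := @crossing x k hs hst; rewrite he.
by move/addIn.
Qed.

Definition gidx (t m n : nat) : nat := if (n <= t - m)%N then (n + m)%N else (n + m - t)%N.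

Lemma pos_main (x : seq int) : XposU x ->
  [/\ XnegU (vervaat x), theta (vervaat x) = theta x, height (vervaat x) = - height x,
      (forall h, Nneg (vervaat x) (- h) = Npos x (height x - 1 - h)) & vervaat (vervaat x) = x].
Proof.
case=> [[hsz h0 ht hin hst] hN].
set t := theta x in h0 ht hin hst hN *.
have hS : size x = t.+1 by rewrite /t /theta; nlia.
have nonneg : forall n, 0 <= nth 0 x n.
  move=> n; case: (posnP n) => [->|n0]; first by rewrite h0.
  case: (ltngtP n t) => hn.
  - by apply: ltW; apply: hin; rewrite n0 hn.
  - by rewrite nth_default //; nlia.
  - by rewrite hn ht.
have t0 : (0 < t)%N.
  move: hN; rewrite /Npos -/t; case: (t) => //.
have t2 : (2 <= t)%N.
  case: (ltngtP t 1) => // ht1; first by nlia.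
  have := hst 0%N t0; rewrite /jump -ht1 ht h0 subrr => -[] //.
have x1 : 0 < nth 0 x 1 by apply: hin; nlia.
set H := height x.
have hH : H = foldr Num.max 0 x.
  by apply: height_nonneg => w /(nthP 0)[n _ <-]; exact: nonneg n.
have H1 : nth 0 x 1 <= H by rewrite hH; apply: fmax_ge; apply: mem_nth; nlia.
have Hpos : 0 < H by apply: lt_le_trans H1.
have Hin : H \in x.
  have := fmax_in x; rewrite -hH inE => /orP[/eqP h|//].
  by rewrite h ltxx in Hpos.
have Hge : forall n, nth 0 x n <= H.
  move=> n; case: (ltnP n (size x)) => hn.
    by rewrite hH; apply: fmax_ge; exact: mem_nth.
  by rewrite nth_default //; apply: ltW.
set m := index H x.
have hm : (m < size x)%N by rewrite index_mem.
have xm : nth 0 x m = H by exact: nth_index.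
have m0 : (0 < m)%N.
  rewrite lt0n; apply/eqP => e; move: xm; rewrite e h0 => e'.
  by rewrite -e' ltxx in Hpos.
have mt : (m < t)%N.
  have : (m <= t)%N by nlia.
  rewrite leq_eqVlt => /orP[/eqP e|//].
  by move: xm; rewrite e ht => e'; rewrite -e' ltxx in Hpos.
have step1 : forall n, (0 < n <= t)%N -> nth 0 x n = H ->
    (jump x n.-1 == 1) && (nth 0 x n.-1 == H - 1).
  move=> n /andP[n0 nt] hx.
  have e : n.-1.+1 = n by rewrite prednK.
  have := hst n.-1 ltac:(nlia); rewrite /jump e hx => -[j|j].
    by rewrite j eqxx /=; apply/eqP; rewrite -j; ring.
  have := Hge n.-1; have -> : nth 0 x n.-1 = H + 1 by lia.
  by move=> hc; exfalso; lia.
have uniqH : forall n, (n <= t)%N -> nth 0 x n = H -> n = m.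
  move=> n hn hx.
  have n0 : (0 < n)%N.
    rewrite lt0n; apply/eqP => e; move: hx; rewrite e h0 => e'.
    by rewrite -e' ltxx in Hpos.
  have := @count1 _ _ _ n.-1 m.-1 hN.
  rewrite !mem_iota /= step1 ?n0 // step1 ?m0 ?xm //; last by nlia.
  move=> /(_ ltac:(nlia) isT ltac:(nlia) isT); nlia.
have zero0 : forall n, (n <= t)%N -> nth 0 x n = 0 -> n = 0%N \/ n = t.
  move=> n hn hx; case: (posnP n) => [->|n0]; first by left.
  case: (ltngtP n t) => hnt; [|nlia|by right].
  by have := hin n; rewrite n0 hnt hx ltxx => /(_ isT).
have Vx : vervaat x = vm m x by rewrite vervaatE.
rewrite Vx.
have Ey : forall n, (n <= t)%N -> nth 0 (vm m x) n = nth 0 x (gidx t m n) - H.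
  by move=> n hn; rewrite nth_vm // -?xm //; nlia.
have gle : forall n, (n <= t)%N -> (gidx t m n <= t)%N by move=> n hn; unfold gidx; case: ifP => ?; nlia.
have ty : theta (vm m x) = t by rewrite theta_vm.
have he : nth 0 x 0 = nth 0 x t by rewrite h0 ht.
have yexc : is_neg_exc (vm m x).
  split.
  - by rewrite size_vm // hS.
  - rewrite Ey //; have -> : gidx t m 0%N = m by unfold gidx; rewrite leq0n add0n.
    by rewrite xm subrr.
  - have gt : gidx t m t = m by unfold gidx; case: ifP => ?; nlia.
    by rewrite ty Ey // gt xm subrr.
  - rewrite ty => n hn; rewrite Ey; last by nlia.
    rewrite subr_lt0 lt_neqAle Hge andbT; apply/eqP => hx.
    have := uniqH _ (gle n ltac:(nlia)) hx; unfold gidx; case: ifP => ?; nlia.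
  - rewrite ty => n hn; rewrite jump_vm //; first apply: hst.
    by rewrite /rotf; case: ifP => ?; nlia.
have memH : - H \in vm m x.
  have -> : - H = nth 0 (vm m x) (t - m).
    rewrite Ey; last by nlia.
    have -> : gidx t m (t - m)%N = t by unfold gidx; case: ifP => ?; nlia.
    by rewrite ht sub0r.
  by apply: mem_nth; rewrite size_vm //; nlia.
have hy : height (vm m x) = - H.
  apply: height_min => // w /(nthP 0)[n]; rewrite size_vm // => hn <-.
  rewrite Ey; last by nlia.
  have := nonneg (gidx t m n); have := Hge (gidx t m n); lia.
have stx : steps x by [].
have sz0 : (0 < size x)%N by [].
have N10 : Ncnt x 1 0 = 1%N.
  rewrite /Ncnt -/t.
  have -> : iota 0 t = 0%N :: iota 1 t.-1 by rewrite -{1}(prednK t0).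
  rewrite /= h0 eqxx andbT.
  have -> : jump x 0 = 1.
    have := hst 0%N t0; rewrite /jump h0 subr0 => -[//|e].
    by rewrite e in x1.
  rewrite eqxx /= (@eq_in_count _ _ pred0); first by rewrite count_pred0.
  move=> n; rewrite mem_iota => /andP[n1 n2] /=.
  have := hin n; rewrite n1 /= => /(_ ltac:(nlia)) hp.
  by rewrite (gt_eqF hp) andbF.
split => //.
- split => //; rewrite hy NnegE Ncnt_vm // xm.
  have -> : - H + 1 + H = 0 + 1 by ring.
  by rewrite cross.
- move=> h; rewrite NnegE NposE Ncnt_vm // xm.
  have -> : - h + H = (H - 1 - h) + 1 by ring.
  by rewrite cross.
- set y := vm m x.
  have Hy : height y \in y by rewrite hy.
  rewrite vervaatE //.
  have -> : index (height y) y = (t - m)%N.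
    set i := index _ _.
    have hi : (i < size y)%N by rewrite index_mem.
    have yi : nth 0 y i = - H by rewrite nth_index // -hy.
    have hiy : (i <= t)%N by move: hi; rewrite /y size_vm //; nlia.
    move: yi; rewrite /y Ey // => /eqP; rewrite subr_eq addNr => /eqP hz.
    have := zero0 _ (gle i hiy) hz; unfold gidx.
    case: (leqP i (t - m)) => hc [] ?; nlia.
  by rewrite /y /t vm_inv.
Qed.

Definition negs (x : seq int) : seq int := map (fun v : int => - v) x.

Lemma size_negs x : size (negs x) = size x. Proof. by rewrite size_map. Qed.
Lemma theta_negs x : theta (negs x) = theta x. Proof. by rewrite /theta size_negs. Qed.
Lemma nth_negs x n : nth 0 (negs x) n = - nth 0 x n.
Proof.
case: (ltnP n (size x)) => h; first by rewrite (nth_map 0).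
by rewrite !nth_default ?oppr0 ?size_negs.
Qed.
Lemma jump_negs x n : jump (negs x) n = - jump x n.
Proof. rewrite /jump !nth_negs. ring. Qed.
Lemma Ncnt_negs x e h : Ncnt (negs x) e h = Ncnt x (- e) (- h).
Proof.
rewrite /Ncnt theta_negs; apply: eq_count => n /=.
by rewrite jump_negs nth_negs !eqr_oppLR.
Qed.
Lemma negsK x : negs (negs x) = x.
Proof. by rewrite /negs -map_comp map_id_in // => v _ /=; rewrite opprK. Qed.

Lemma exc_negs b x : is_exc b x -> is_exc (~~ b) (negs x).
Proof.
case=> hs h0 ht hin hst; split.
- by rewrite size_negs.
- by rewrite nth_negs h0 oppr0.
- by rewrite theta_negs nth_negs ht oppr0.
- move=> n; rewrite theta_negs nth_negs => hn; have := hin n hn.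
  by case: (b); rewrite /= ?oppr_lt0 ?oppr_gt0.
- move=> n; rewrite theta_negs jump_negs => /hst [->|->]; rewrite ?opprK; [right|left] => //.
Qed.

Lemma exc_sign b x : is_exc b x -> forall w, w \in x -> if b then 0 <= w else w <= 0.
Proof.
case=> hs h0 ht hin hst w /(nthP 0)[n hn <-].
case: (posnP n) => [->|n0]; first by rewrite h0; case: (b).
case: (ltngtP n (theta x)) => hnt.
- by have := hin n; rewrite n0 hnt => /(_ isT); case: (b) => /ltW.
- by move: hn hnt; rewrite /theta; fixsz; lia.
- by rewrite hnt ht; case: (b).
Qed.

Lemma fmax_negs (s : seq int) : foldr Num.max 0 (negs s) = - foldr Num.min 0 s.
Proof. by elim: s => [|a s IH] /=; rewrite ?oppr0 // IH oppr_min. Qed.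
Lemma fmin_negs (s : seq int) : foldr Num.min 0 (negs s) = - foldr Num.max 0 s.
Proof. by elim: s => [|a s IH] /=; rewrite ?oppr0 // IH oppr_max. Qed.

Lemma mem_negs x w : (w \in negs x) = (- w \in x).
Proof. by rewrite -{1}(opprK w) (mem_map oppr_inj). Qed.

Lemma height_negs b x : is_exc b x -> height (negs x) = - height x.
Proof.
move=> /exc_sign hs; case: b hs => hs.
- rewrite (@height_nonneg x) // (@height_nonpos (negs x)) ?fmin_negs //.
  by move=> w; rewrite mem_negs => /hs; rewrite oppr_ge0.
- rewrite (@height_nonpos x) // (@height_nonneg (negs x)) ?fmax_negs //.
  by move=> w; rewrite mem_negs => /hs; rewrite oppr_le0.
Qed.

Lemma vervaat_negs x : height (negs x) = - height x -> vervaat (negs x) = negs (vervaat x).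
Proof.
move=> hn; rewrite /vervaat hn /negs (index_map oppr_inj).
rewrite -map_drop behead_map -map_take -map_cat -!map_comp.
by apply: eq_map => v /=; rewrite opprB opprK addrC.
Qed.

Lemma neg_to_pos x : XnegU x -> XposU (negs x).
Proof.
case=> hx hN; split; first exact: (@exc_negs false x hx).
rewrite NposE Ncnt_negs (@height_negs false x hx).
have -> : - (- height x - 1) = height x + 1 by ring.
by [].
Qed.

Lemma neg_main (x : seq int) : XnegU x ->
  [/\ XposU (vervaat x), theta (vervaat x) = theta x, height (vervaat x) = - height x,
      (forall h, Npos (vervaat x) (- h) = Nneg x (height x + 1 - h)) & vervaat (vervaat x) = x].
Proof.
move=> hx; have hz := neg_to_pos _ hx.
have [[hVz hNz] tz hz' lz iz] := pos_main _ hz.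
have hzx : height (negs x) = - height x by exact: (@height_negs false x hx.1).
have Vx : vervaat x = negs (vervaat (negs x)) by rewrite vervaat_negs // negsK.
have hVzn : height (negs (vervaat (negs x))) = - height (vervaat (negs x)).
  exact: (@height_negs false _ hVz).
split.
- rewrite Vx; case: (neg_to_pos _ (conj hVz hNz)) => a b; split => //.
- by rewrite Vx theta_negs tz theta_negs.
- by rewrite Vx hVzn hz' hzx opprK.
- move=> h; rewrite Vx NposE Ncnt_negs opprK -[h]opprK -NnegE lz NnegE hzx.
  rewrite NposE Ncnt_negs opprK; congr (Ncnt _ _ _); ring.
- by rewrite Vx vervaat_negs // iz negsK.
Qed.

Theorem proposition4 :
  (forall x, XU x -> XU (vervaat x)) /\
  (forall x1 x2, XU x1 -> XU x2 -> vervaat x1 = vervaat x2 -> x1 = x2) /\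
  (forall y, XU y -> exists x, XU x /\ vervaat x = y) /\
  (forall x, XU x -> theta (vervaat x) = theta x /\ height (vervaat x) = - height x) /\
  (forall x, XposU x -> XnegU (vervaat x)) /\
  (forall x, XnegU x -> XposU (vervaat x)) /\
  (forall x, XposU x -> forall h : int, 0 <= h <= height x - 1 ->
       Nneg (vervaat x) (- h) = Npos x (height x - 1 - h)) /\
  (forall x, XnegU x -> forall h : int, height x + 1 <= h <= 0 ->
       Npos (vervaat x) (- h) = Nneg x (height x + 1 - h)) /\
  (forall x, XU x -> vervaat (vervaat x) = x).
Proof.
have inv : forall x, XU x -> vervaat (vervaat x) = x.
  by move=> x [/pos_main[]|/neg_main[]].
split; first by move=> x [/pos_main[] ? ? ? ? ?|/neg_main[] ? ? ? ? ?]; [right|left].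
split.
  by move=> x1 x2 h1 h2 e; rewrite -(inv _ h1) -(inv _ h2) e.
split.
  move=> y hy; exists (vervaat y); split; last exact: inv.
  by case: hy => [/pos_main[] ? ? ? ? ?|/neg_main[] ? ? ? ? ?]; [right|left].
split; first by move=> x [/pos_main[]|/neg_main[]].
split; first by move=> x /pos_main[].
split; first by move=> x /neg_main[].
split; first by move=> x /pos_main[] _ _ _ h _ ? _.
split; first by move=> x /neg_main[] _ _ _ h _ ? _.
exact: inv.
Qed.
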